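(* Suppose $d\mid n$ and $d=d_1\cdots d_l$ with integers $d_1,\dots,d_l>1$ and $l>1$. Regard the iterated wreath product $\Sigma_{d_1}\wr\cdots\wr\Sigma_{d_l}$ as a subgroup of $\Sigma_n$ via $\Sigma_{d_1}\wr\cdots\wr\Sigma_{d_l}\hookrightarrow\Sigma_d\xrightarrow{\Delta}(\Sigma_d)^{n/d}\hookrightarrow\Sigma_n$, with $\Delta$ the diagonal embedding. Then the fixed point space $|\Pi_n|^{\Sigma_{d_1}\wr\cdots\wr\Sigma_{d_l}}$ is collapsible.
   Context: $\Pi_n$ is the poset of proper nontrivial partitions of $\{1,\dots,n\}$ ordered by refinement, $|\Pi_n|$ the realisation of its order complex with its $\Sigma_n$-action. The wreath product $\Sigma_a\wr\Sigma_b=(\Sigma_a)^b\rtimes\Sigma_b$ acts on $ab$ points, iterated in the standard way. *)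

(* Defs.v *)
From mathcomp Require Import all_boot all_fingroup.
Set Implicit Arguments. Unset Strict Implicit. Unset Printing Implicit Defensive.

Definition complex (V : finType) := {set V} -> Prop.

Definition free_pair (V : finType) (K : complex V) (sigma tau : {set V}) : Prop :=
  [/\ K sigma, K tau, sigma \proper tau, #|tau| = #|sigma|.+1 &
      forall s, K s -> sigma \proper s -> s = tau].

Definition elem_collapse (V : finType) (K L : complex V) : Prop :=
  exists sigma tau, free_pair K sigma tau /\
    forall s, L s <-> (K s /\ s <> sigma /\ s <> tau).

Inductive collapses (V : finType) : complex V -> complex V -> Prop :=
| collapses_refl K L : (forall s, K s <-> L s) -> collapses K L
| collapses_step K K' L : elem_collapse K K' -> collapses K' L -> collapses K L.

Definition collapsible (V : finType) (K : complex V) : Prop :=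
  exists v : V, collapses K (fun s => s = [set v]).

Definition order_complex (V : finType) (P : pred V) (le : rel V) : complex V :=
  fun s => [/\ s != set0, {subset s <= P} &
              forall x y, x \in s -> y \in s -> le x y || le y x].

(* The subcomplex of simplices fixed (pointwise) by every element of a
   family H acting via act.  Since the action is order-preserving, its
   realisation is the fixed point space of the realisation. *)
Definition fixed_complex (G : Type) (V : finType) (K : complex V)
    (act : G -> V -> V) (H : G -> Prop) : complex V :=
  fun s => K s /\ forall h, H h -> forall v, v \in s -> act h v = v.

Definition partn (n : nat) := {set {set 'I_n}}.

Definition discrete_part n : partn n := [set [set x] | x : 'I_n].
Definition indiscrete_part n : partn n := [set [set: 'I_n]].

Definition Pi (n : nat) : pred (partn n) :=
  fun P => [&& partition P [set: 'I_n], P != discrete_part n & P != indiscrete_part n].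

Definition refines (n : nat) : rel (partn n) :=
  fun P Q => [forall B in P, [exists C in Q, B \subset C]].

Definition part_act (n : nat) (g : {perm 'I_n}) (P : partn n) : partn n :=
  [set (g @: B) | B : {set 'I_n} in P].

(* ds = [:: d_1; ...; d_l]; points of {0..d-1}, d = d_1*...*d_l, are written in
   mixed radix with digit k (0-based) in [0, d_(k+1)), digit 0 least significant.
   Sigma_{d_1} wr ... wr Sigma_{d_l} consists of the g such that the k-th digit of
   g x is sigma_{k,c}(k-th digit of x) where c = the digits of x above k and
   each sigma_{k,c} is a permutation of [0, d_(k+1)). *)
Definition radix (ds : seq nat) (k : nat) : nat := \prod_(j < k) nth 1 ds j.
Definition digit (ds : seq nat) (k x : nat) : nat := (x %/ radix ds k) %% nth 1 ds k.
Definition high (ds : seq nat) (k x : nat) : nat := x %/ radix ds k.+1.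

Definition in_wreath (ds : seq nat) (g : nat -> nat) : Prop :=
  let d := \prod_(i <- ds) i in
  (forall x, x < d -> g x < d) /\
  exists sigma : nat -> nat -> nat -> nat,
    (forall k c, k < size ds ->
       (forall i, i < nth 1 ds k -> sigma k c i < nth 1 ds k) /\
       (forall i j, i < nth 1 ds k -> j < nth 1 ds k -> sigma k c i = sigma k c j -> i = j)) /\
    (forall x, x < d -> forall k, k < size ds ->
       digit ds k (g x) = sigma k (high ds k x) (digit ds k x)).

(* image in Sigma_n via Sigma_d --diag--> (Sigma_d)^(n/d) --> Sigma_n,
   the (n/d) copies acting on the consecutive blocks [q*d, (q+1)*d). *)
Definition in_wreath_Sn (ds : seq nat) (n : nat) (h : {perm 'I_n}) : Prop :=
  let d := \prod_(i <- ds) i in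
  exists g, in_wreath ds g /\
    forall x : 'I_n, (h x : nat) = (x %/ d) * d + g (x %% d).

(* Main.v *)
Require Import Defs.
From mathcomp Require Import all_boot all_fingroup zify.
From Stdlib Require Import ClassicalEpsilon.
Set Implicit Arguments. Unset Strict Implicit. Unset Printing Implicit Defensive.


Definition ceq (V : finType) (K L : complex V) := forall s, K s <-> L s.

Lemma elem_collapse_ext (V : finType) (K K' L L' : complex V) :
  ceq K K' -> ceq L L' -> elem_collapse K L -> elem_collapse K' L'.
Proof.
move=> hK hL [sg [tau [[h1 h2 h3 h4 h5] h6]]].
exists sg, tau; split.
  split=> //; try by apply/hK.
  by move=> s /hK; apply: h5.
move=> s; split.
  by move/hL/h6=> [/hK ? ?].
by move=> [/hK ? ?]; apply/hL/h6.
Qed.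

Lemma collapses_ext (V : finType) (K K' L L' : complex V) :
  ceq K K' -> ceq L L' -> collapses K L -> collapses K' L'.
Proof.
move=> hK hL H; elim: H K' L' hK hL => {K L}.
  move=> K L hKL K' L' hK hL; apply: collapses_refl => s.
  by split=> [/hK/hKL/hL | /hL/hKL/hK].
move=> K K1 L hc _ IH K' L' hK hL.
apply: (@collapses_step _ K' K1).
  by apply: (elem_collapse_ext hK _ hc).
by apply: IH.
Qed.

Lemma collapses_trans (V : finType) (K L M : complex V) :
  collapses K L -> collapses L M -> collapses K M.
Proof.
move=> H; elim: H M => {K L}.
  move=> K L hKL M hLM; apply: (collapses_ext _ _ hLM) => // s.
  by split=> /hKL.
move=> K K1 L hc _ IH M hLM.
by apply: (collapses_step hc); apply: IH.
Qed.

Section Gen.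
Variable V : finType.
Variable le : rel V.
Hypothesis le_refl : forall a, le a a.
Hypothesis le_trans : forall a b c, le a b -> le b c -> le a c.

Definition oc (F : {set V}) := order_complex (fun x => x \in F) le.

Definition chainb (F : {set V}) (s : {set V}) :=
  [&& s != set0, s \subset F & [forall x in s, forall w in s, le x w || le w x]].

Lemma ocP F s : oc F s <-> chainb F s.
Proof.
rewrite /oc /order_complex /chainb; split.
  case=> [h1 h2 h3]; rewrite h1 /=; apply/andP; split.
    by apply/subsetP.
  by apply/forall_inP=> x hx; apply/forall_inP=> w hw; apply: h3.
case/and3P=> h1 /subsetP h2 /forall_inP h3; split=> // x w hx hw.
by move/forall_inP: (h3 x hx); apply.
Qed.

Lemma chain_sub (F' s t : {set V}) : chainb F' s -> t \subset s -> t != set0 -> chainb F' t.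
Proof.
case/and3P=> _ h2 /forall_inP h3 hts ht0; rewrite /chainb ht0 (subset_trans hts h2) /=.
apply/forall_inP=> x hx; apply/forall_inP=> w hw.
by move/forall_inP: (h3 x (subsetP hts _ hx)); apply; apply: (subsetP hts).
Qed.

Section Beat.
Variables (F : {set V}) (y z : V).
Hypotheses (hy : y \in F) (hz : z \in F) (zy : z != y) (lezy : le z y).
Hypothesis hbeat : forall w, w \in F -> w != y -> le w y -> le w z.

Let L (A : {set {set V}}) : complex V :=
  fun s => oc F s /\ (y \in s -> s :\ z \in A).

Let goodb s := [&& chainb F s, y \in s & z \notin s].


Lemma beat_base (A : {set {set V}}) : [set s in A | goodb s] = set0 -> ceq (L A) (oc (F :\ y)).
Proof.
move=> h0 s; split.
  case=> /ocP hs hA.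
  have ys : y \notin s.
    apply/negP=> ys; have := hA ys => hsA.
    have : s :\ z \in [set s in A | goodb s].
      rewrite inE hsA /goodb !inE eqxx /= ys andbT eq_sym zy /=.
      rewrite andbT.       apply: (chain_sub hs); first exact: subsetDl.
      by apply/set0Pn; exists y; rewrite !inE ys eq_sym zy.
    by rewrite h0 inE.
  case/and3P: hs => h1 h2 h3; apply/ocP; rewrite /chainb h1 h3 andbT /=.
  apply/subsetP=> x hx; rewrite !inE (subsetP h2 _ hx) andbT.
  by apply: contraNneq ys => <-.
move/ocP=> hs; split.
  apply/ocP; apply: (chain_sub (F' := F) (s := s)); last by case/and3P: hs.
    by case/and3P: hs => h1 h2 h3; rewrite /chainb h1 h3 (subset_trans h2) ?subsetDl.
  exact: subxx.
move=> ys; case/and3P: hs => _ /subsetP h2 _.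
by have := h2 _ ys; rewrite !inE eqxx.
Qed.

Lemma chain_addz s : chainb F s -> y \in s -> z \notin s -> chainb F (z |: s).
Proof.
move=> hs ys zs; case/and3P: hs => h1 h2 /forall_inP h3.
have hw : forall w, w \in s -> le w z || le z w.
  move=> w ws; case: (eqVneq w y) => [-> | wy]; first by rewrite lezy orbT.
  have := h3 _ ws => /forall_inP /(_ _ ys) /orP [hwy | hyw].
    by rewrite hbeat // (subsetP h2).
  by rewrite (le_trans lezy hyw) orbT.
rewrite /chainb; apply/and3P; split.
- by apply/set0Pn; exists z; rewrite !inE eqxx.
- by rewrite subUset sub1set hz h2.
apply/forall_inP=> a; rewrite !inE => /orP [/eqP -> | ha];
  apply/forall_inP=> b; rewrite !inE => /orP [/eqP -> | hb].
- by rewrite le_refl.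
- by rewrite orbC hw.
- by rewrite hw.
by move/forall_inP: (h3 _ ha); apply.
Qed.

Lemma beat_step k (A : {set {set V}}) :
  #|[set s in A | goodb s]| <= k -> collapses (L A) (oc (F :\ y)).
Proof.
elim: k A => [|k IH] A hk.
  apply: collapses_refl; apply: beat_base.
  by apply/eqP; rewrite -cards_eq0 -leqn0.
case: (set_0Vmem [set s in A | goodb s]) => [h0 | [s0 hs0]].
  by apply: collapses_refl; apply: beat_base.
set G := [set s in A | goodb s] in hk hs0.
case: (@arg_maxnP _ s0 (fun s => s \in G) (fun s => #|s|) hs0) => sg hsg hmax.
move: (hsg); rewrite inE => /andP [sgA /and3P [csg ysg zsg]].
apply: (@collapses_step _ _ (L (A :\ sg))); last first.
  apply: IH; rewrite -ltnS; apply: leq_trans hk.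
  have -> : [set s in A :\ sg | goodb s] = G :\ sg.
    by apply/setP=> s; rewrite !inE andbA.
  by rewrite (cardsD1 sg G) hsg.
have eqsg : forall s : {set V}, y \in s -> (s :\ z == sg) = (s == sg) || (s == z |: sg).
  move=> s ys; apply/idP/idP.
    move/eqP=> <-; case: (boolP (z \in s)) => zs.
      by rewrite setD1K // eqxx orbT.
    by rewrite (setDidPl _) ?eqxx // disjoint_sym disjoints1.
  case/orP=> /eqP ->; last by rewrite setU1K.
  by rewrite (setDidPl _) ?eqxx // disjoint_sym disjoints1.
exists sg, (z |: sg); split.
  split.
  - split; first by apply/ocP.
    by move=> _; rewrite (setDidPl _) // disjoint_sym disjoints1.
  - split; first by apply/ocP; apply: chain_addz.
    by move=> _; rewrite setU1K.
  - by rewrite properUr // sub1set.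
  - by rewrite cardsU1 zsg.
  move=> s [/ocP hs hA] hps.
  have ys : y \in s by rewrite (subsetP (proper_sub hps)).
  have hsz : s :\ z \in G.
    rewrite inE hA //= /goodb !inE eqxx /= ys andbT eq_sym zy /=.
    rewrite andbT; apply: (chain_sub hs); first exact: subsetDl.
    by apply/set0Pn; exists y; rewrite !inE ys eq_sym zy.
  have sub : sg \subset s :\ z.
    apply/subsetP=> x xs; rewrite !inE (subsetP (proper_sub hps) _ xs) andbT.
    by apply: contraNneq zsg => <-.
  have : s :\ z == sg.
    rewrite eq_sym eqEcard sub /=; exact: hmax.
  rewrite eqsg // => /orP [/eqP e | /eqP //].
  by move: hps; rewrite e properE subxx.
move=> s; split.
  rewrite /L;   case=> hs hA; split; first by split=> // /hA; rewrite !inE => /andP [_ ->].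
  case: (boolP (y \in s)) => ys.
    have := hA ys; rewrite !inE => /andP [hne _].
    by move: hne; rewrite eqsg // negb_or => /andP [/eqP ? /eqP ?].
  by split=> e; move: ys; rewrite e ?ysg // !inE ysg orbT.
rewrite /L; case=> [[hs hA] [n1 n2]]; split=> // ys.
by rewrite !inE hA // andbT eqsg // negb_or; apply/andP; split; apply/eqP.
Qed.

Lemma beat : collapses (oc F) (oc (F :\ y)).
Proof.
apply: (collapses_ext (K := L setT) (L := oc (F :\ y))) => //.
  by move=> s; split => [[]|] //; split=> // _; rewrite inE.
exact: (beat_step (leqnn _)).
Qed.

End Beat.
End Gen.

Lemma oc_flip (V : finType) (le : rel V) F :
  ceq (oc le F) (oc (fun a b => le b a) F).
Proof.
move=> s; rewrite /oc /order_complex; split; case=> h1 h2 h3; split=> // x w hx hw;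
  by rewrite orbC; apply: h3.
Qed.

Section Main.
Variable V : finType.
Variable le : rel V.
Hypothesis le_refl : forall a, le a a.
Hypothesis le_trans : forall a b c, le a b -> le b c -> le a c.

Lemma oc_single c : ceq (oc le [set c]) (fun s => s = [set c]).
Proof.
move=> s; split.
  case=> h1 h2 h3; apply/eqP; rewrite eqEsubset; apply/andP; split.
    by apply/subsetP=> x /h2.
  case/set0Pn: h1 => x hx; have := h2 _ hx; rewrite inE => /eqP ex.
  by rewrite sub1set -ex.
move=> ->; split.
- by apply/set0Pn; exists c; rewrite inE.
- by move=> x.
by move=> x w; rewrite !inE => /eqP -> /eqP ->; rewrite le_refl.
Qed.

Lemma phase2 k (F : {set V}) c :
  #|F| <= k ->
  (forall a b, a \in F -> b \in F -> le a b -> le b a -> a = b) ->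
  c \in F -> (forall y, y \in F -> le y c) ->
  collapses (oc le F) (fun s => s = [set c]).
Proof.
elim: k F => [|k IH] F hk anti cF hc.
  by move: hk; rewrite leqn0 cards_eq0 => /eqP F0; rewrite F0 inE in cF.
case: (set_0Vmem (F :\ c)) => [h0 | [y0 hy0]].
  apply: collapses_refl => s.
  have -> : F = [set c].
    apply/eqP; rewrite eqEsubset sub1set cF andbT; apply/subsetP=> x xF.
    rewrite inE; apply/negPn/negP=> xc.
    have : x \in F :\ c by rewrite !inE xc xF.
    by rewrite h0 inE.
  exact: oc_single.
pose up y := [set w in F | le y w].
case: (@arg_minnP _ y0 (fun y => y \in F :\ c) (fun y => #|up y|) hy0) => y hy hmin.
move: (hy); rewrite !inE => /andP [yc yF].
apply: collapses_trans (_ : collapses (oc le (F :\ y)) _); last first.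
  apply: IH.
  - by rewrite -ltnS; apply: leq_trans hk; rewrite (cardsD1 y F) yF.
  - by move=> a b; rewrite !inE => /andP [_ ?] /andP [_ ?]; apply: anti.
  - by rewrite !inE eq_sym yc.
  - by move=> w; rewrite !inE => /andP [_ ?]; apply: hc.
pose le' := fun a b => le b a.
apply: (collapses_ext (oc_flip le' F) (oc_flip le' (F :\ y)) _).
apply: (@beat V le' _ _ F y c) => //.
- by move=> a b d; rewrite /le' => h1 h2; apply: le_trans h2 h1.
- by rewrite eq_sym.
- by apply: hc.
move=> w wF wy; rewrite /le' => hyw.
case: (eqVneq w c) => [-> | wc]; first exact: le_refl.
have wFc : w \in F :\ c by rewrite !inE wc.
have := hmin _ wFc; rewrite leqNgt => /negP; case.
apply: proper_card; rewrite properE; apply/andP; split.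
  by apply/subsetP=> x; rewrite !inE => /andP [-> /(le_trans hyw) ->].
apply/subsetP => /(_ y); rewrite !inE yF le_refl => /(_ isT) hwy.
by move/eqP: wy; apply; apply: anti.
Qed.

Lemma phase1 k (F : {set V}) c (f : V -> V) :
  #|F| <= k ->
  (forall a b, a \in F -> b \in F -> le a b -> le b a -> a = b) ->
  c \in F ->
  (forall y, y \in F -> [/\ f y \in F, le (f y) y, le (f y) c &
      forall w, w \in F -> le w y -> le w c -> le w (f y)]) ->
  collapses (oc le F) (fun s => s = [set c]).
Proof.
elim: k F => [|k IH] F hk anti cF hf.
  by move: hk; rewrite leqn0 cards_eq0 => /eqP F0; rewrite F0 inE in cF.
case: (set_0Vmem [set y in F | ~~ le y c]) => [h0 | [y0 hy0]].
  apply: (phase2 (leqnn _)) => // y yF; apply/negPn/negP => hyc.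
  have : y \in [set y in F | ~~ le y c] by rewrite inE yF hyc.
  by rewrite h0 inE.
pose down y := [set w in F | le w y].
case: (@arg_minnP _ y0 (fun y => y \in [set y in F | ~~ le y c]) (fun y => #|down y|) hy0)
  => y hy hmin.
move: (hy); rewrite !inE => /andP [yF yc].
have [fyF fyy fyc fmax] := hf y yF.
have fyne : f y != y by apply: contraNneq yc => <-.
apply: collapses_trans (_ : collapses (oc le (F :\ y)) _); last first.
  apply: IH.
  - by rewrite -ltnS; apply: leq_trans hk; rewrite (cardsD1 y F) yF.
  - by move=> a b; rewrite !inE => /andP [_ ?] /andP [_ ?]; apply: anti.
  - by rewrite !inE cF andbT; apply: contraNneq yc => <-; apply: le_refl.
  - move=> w; rewrite !inE => /andP [wy wF].
    have [h1 h2 h3 h4] := hf w wF; split=> //.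
      by rewrite h1 andbT; apply: contraNneq yc => <-.
    by move=> u; rewrite !inE => /andP [_ uF]; apply: h4.
apply: (@beat V le _ _ F y (f y)) => //.
move=> w wF wy hwy; apply: fmax => //.
apply/negPn/negP=> wc.
have wS : w \in [set y in F | ~~ le y c] by rewrite inE wF wc.
have := hmin _ wS; rewrite leqNgt => /negP; case.
apply: proper_card; rewrite properE; apply/andP; split.
  by apply/subsetP=> x; rewrite !inE => /andP [-> /le_trans /(_ hwy) ->].
apply/subsetP => /(_ y); rewrite !inE yF le_refl => /(_ isT) hyw.
by move/eqP: wy; apply; apply: anti.
Qed.

End Main.

Section Parts.
Variable n : nat.
Local Notation partn := Defs.partn.
Implicit Types P Q : partn n.

Definition sameb P (x y : 'I_n) := y \in pblock P x.

Definition ptn P := partition P [set: 'I_n].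

Lemma ptn_cover P x : ptn P -> x \in cover P.
Proof. by move=> /and3P [/eqP -> _ _]; rewrite inE. Qed.

Lemma sameb_refl P x : ptn P -> sameb P x x.
Proof. by move=> hP; rewrite /sameb mem_pblock ptn_cover. Qed.

Lemma sameb_eq P x y : ptn P -> sameb P x y = (pblock P x == pblock P y).
Proof. by move=> hP; rewrite eq_pblock ?ptn_cover //; case/and3P: hP. Qed.

Lemma part_eq P Q : ptn P -> ptn Q -> (forall x y, sameb P x y = sameb Q x y) -> P = Q.
Proof.
move=> hP hQ h.
rewrite -(equivalence_partition_pblock hP) -(equivalence_partition_pblock hQ).
rewrite /equivalence_partition; apply: eq_imset => x; apply/setP=> y.
by rewrite !inE; have := h x y; rewrite /sameb => ->.
Qed.

Lemma refinesP P Q : ptn P -> ptn Q ->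
  refines P Q <-> (forall x y, sameb P x y -> sameb Q x y).
Proof.
move=> hP hQ; have tP := partition_trivIset hP; have tQ := partition_trivIset hQ.
split.
  move/forall_inP=> h x y; rewrite /sameb.
  have /h /exists_inP [C CQ sub] := pblock_mem (ptn_cover x hP).
  have xC : x \in C by rewrite (subsetP sub) // mem_pblock ptn_cover.
  by rewrite (def_pblock tQ CQ xC) => /(subsetP sub).
move=> h; apply/forall_inP=> B BP; apply/exists_inP.
have /set0Pn [x xB] : B != set0 by apply: (partition_neq0 hP).
exists (pblock Q x); first exact: pblock_mem (ptn_cover x hQ).
apply/subsetP=> y yB; apply: h; rewrite /sameb (def_pblock tP BP xB) //.
Qed.

Lemma refines_refl P : refines P P.
Proof. by apply/forall_inP=> B BP; apply/exists_inP; exists B. Qed.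

Lemma refines_trans P Q R : refines P Q -> refines Q R -> refines P R.
Proof.
move=> /forall_inP h1 /forall_inP h2; apply/forall_inP=> B BP.
have /exists_inP [C CQ sBC] := h1 B BP.
have /exists_inP [D DR sCD] := h2 C CQ.
by apply/exists_inP; exists D => //; apply: subset_trans sCD.
Qed.

Lemma act_ptn (h : {perm 'I_n}) P : ptn P -> ptn (part_act h P).
Proof.
move=> hP; rewrite /ptn /part_act.
have -> : [set: 'I_n] = h @: [set: 'I_n].
  by apply/esym/eqP; rewrite eqEcard subsetT (card_imset _ (@perm_inj _ h)) leqnn.
by rewrite imset_partition //; exact: perm_inj.
Qed.

Lemma act_same (h : {perm 'I_n}) P x y : ptn P ->
  sameb (part_act h P) (h x) (h y) = sameb P x y.
Proof.
move=> hP; rewrite /sameb.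
have tA := partition_trivIset (act_ptn h hP).
have -> : pblock (part_act h P) (h x) = h @: pblock P x.
  apply: def_pblock => //.
    by apply: imset_f; apply: pblock_mem; apply: ptn_cover.
  by apply: imset_f; rewrite mem_pblock ptn_cover.
by rewrite mem_imset //; exact: perm_inj.
Qed.

Lemma fixed_same (h : {perm 'I_n}) P x y : ptn P -> part_act h P = P ->
  sameb P (h x) (h y) = sameb P x y.
Proof. by move=> hP e; rewrite -{1}e act_same. Qed.

Lemma same_fixed (h : {perm 'I_n}) P : ptn P ->
  (forall x y, sameb P (h x) (h y) = sameb P x y) -> part_act h P = P.
Proof.
move=> hP hs; apply: part_eq => //; first exact: act_ptn.
move=> x y; rewrite -(permKV h x) -(permKV h y) act_same // hs.
Qed.

Definition preim_ptn (rT : eqType) (f : 'I_n -> rT) : partn n :=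
  preim_partition f [set: 'I_n].

Lemma preim_ptnP (rT : eqType) (f : 'I_n -> rT) : ptn (preim_ptn f).
Proof. exact: preim_partitionP. Qed.

Lemma preim_same (rT : eqType) (f : 'I_n -> rT) x y :
  sameb (preim_ptn f) x y = (f x == f y).
Proof.
rewrite /sameb /preim_ptn /preim_partition pblock_equivalence_partition ?inE //.
by split=> // /eqP ->.
Qed.

Lemma discrete_preim : discrete_part n = preim_ptn (fun x => x).
Proof.
rewrite /preim_ptn /preim_partition /equivalence_partition /discrete_part.
apply/setP=> B; apply/imsetP/imsetP => [[x _ ->] | [x _ ->]]; exists x => //.
  by apply/setP=> y; rewrite !inE eq_sym.
by apply/setP=> y; rewrite !inE eq_sym.
Qed.

Lemma discrete_same P : ptn P -> P = discrete_part n -> forall x y, sameb P x y -> x = y.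
Proof. by move=> _ ->; rewrite discrete_preim => x y; rewrite preim_same => /eqP. Qed.

Lemma indiscrete_same P : 0 < n -> P = indiscrete_part n -> forall x y, sameb P x y.
Proof.
move=> n0 -> x y; rewrite /sameb /indiscrete_part.
rewrite (def_pblock (trivIset1 _) (set11 _)) ?inE //.
Qed.

End Parts.

Lemma radix0 ds : radix ds 0 = 1.
Proof. by rewrite /radix big_ord0. Qed.

Lemma radix_cons e0 ds k : radix (e0 :: ds) k.+1 = e0 * radix ds k.
Proof. by rewrite /radix big_ord_recl. Qed.

Lemma radix_full ds : radix ds (size ds) = \prod_(i <- ds) i.
Proof.
elim: ds => [|e ds IH]; first by rewrite radix0 big_nil.
by rewrite /= radix_cons IH big_cons.
Qed.

Lemma radix_recr ds k : radix ds k.+1 = radix ds k * nth 1 ds k.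
Proof. by rewrite /radix big_ord_recr. Qed.

Lemma digit_cons0 e0 ds y : digit (e0 :: ds) 0 y = y %% e0.
Proof. by rewrite /digit radix0 divn1. Qed.

Lemma digit_consS e0 ds k y : digit (e0 :: ds) k.+1 y = digit ds k (y %/ e0).
Proof. by rewrite /digit radix_cons divnMA. Qed.

Lemma high_cons0 e0 ds y : high (e0 :: ds) 0 y = y %/ e0.
Proof. by rewrite /high radix_cons radix0 muln1. Qed.

Lemma high_consS e0 ds k y : high (e0 :: ds) k.+1 y = high ds k (y %/ e0).
Proof. by rewrite /high radix_cons divnMA. Qed.

Lemma nth_pos ds k : all (fun di => 1 < di) ds -> 0 < nth 1 ds k.
Proof.
move=> /(all_nthP 1) h; case: (ltnP k (size ds)) => hk.
  by have := h k hk; case: (nth 1 ds k).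
by rewrite nth_default.
Qed.

Lemma radix_pos ds k : all (fun di => 1 < di) ds -> 0 < radix ds k.
Proof. by move=> h; apply: prodn_gt0 => i; apply: nth_pos. Qed.

Section Wr.
Variables (n e0 : nat) (ds' : seq nat).
Local Notation ds := (e0 :: ds').
Hypothesis hn : 0 < n.
Hypothesis hs : 0 < size ds'.
Hypothesis hall : all (fun di => 1 < di) ds.
Local Notation d' := (\prod_(i <- ds') i).
Local Notation d := (\prod_(i <- ds) i).
Hypothesis hdn : d %| n.

Lemma d_eq : d = e0 * d'.
Proof. by rewrite big_cons. Qed.

Lemma e0_gt1 : 1 < e0.
Proof. by case/andP: hall. Qed.

Lemma hall' : all (fun di => 1 < di) ds'.
Proof. by case/andP: hall. Qed.

Local Notation s' := (size ds').
Local Notation r := (radix ds' s'.-1).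
Local Notation dl := (nth 1 ds' s'.-1).

Lemma dl_gt1 : 1 < dl.
Proof. by have /(all_nthP 1) := hall'; apply; rewrite prednK ?leqnn. Qed.

Lemma r_pos : 0 < r.
Proof. exact: radix_pos hall'. Qed.

Lemma d'_eq : d' = r * dl.
Proof. by rewrite -radix_full -radix_recr prednK. Qed.

Lemma d_pos : 0 < d.
Proof. by rewrite d_eq d'_eq; have := e0_gt1; have := dl_gt1; have := r_pos; nia. Qed.

Lemma d_le_n : d <= n.
Proof. exact: dvdn_leq. Qed.

Definition K (z : nat) := digit ds' s'.-1 z.
Definition kap (x : 'I_n) := K ((x %% d) %/ e0).

Lemma kapE (x : 'I_n) : kap x = digit ds (size ds).-1 (x %% d).
Proof. by rewrite /kap /K /= [in RHS](esym (prednK hs)) digit_consS. Qed.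

Lemma K_lt z : K z < dl.
Proof. by rewrite /K /digit ltn_mod; have := dl_gt1; case: (dl). Qed.

Lemma wreath_kap (h : {perm 'I_n}) : @in_wreath_Sn ds n h ->
  forall x y : 'I_n, (kap (h x) == kap (h y)) = (kap x == kap y).
Proof.
case=> g [[glt [sigma [hsig hdig]]] hh] x y.
have hmod : forall z : 'I_n, (h z) %% d = g (z %% d).
  move=> z; rewrite hh modnMDl modn_small //; apply: glt.
  by rewrite ltn_mod d_pos.
have hk : forall z : 'I_n, kap (h z) = sigma s' 0 (kap z).
  move=> z; rewrite !kapE hmod /= hdig ?ltn_mod ?d_pos //.
  congr sigma; rewrite /high (radix_full ds).
  by rewrite divn_small // ltn_mod d_pos.
have [sl sinj] := hsig s' 0 (leqnn _).
rewrite !hk; apply/eqP/eqP=> [e | -> //].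
apply: sinj => //.
- by rewrite -[size ds'](prednK hs) /=; exact: K_lt.
- by rewrite -[size ds'](prednK hs) /=; exact: K_lt.
Qed.

Section MkPerm.
Variable g : nat -> nat.
Hypothesis glt : forall x, x < d -> g x < d.
Hypothesis ginj : forall x y, x < d -> y < d -> g x = g y -> x = y.

Lemma hfun_lt (x : 'I_n) : x %/ d * d + g (x %% d) < n.
Proof.
have dp := d_pos.
have hq : x %/ d < n %/ d by rewrite ltn_divLR // divnK.
have hg : g (x %% d) < d by apply: glt; rewrite ltn_mod.
have := divnK hdn; move: hq hg; set q := x %/ d; set m := n %/ d; set gg := g _.
move=> *; nia.
Qed.

Definition hfun (x : 'I_n) : 'I_n := Ordinal (hfun_lt x).

Lemma hfun_inj : injective hfun.
Proof.
move=> x y /(congr1 val) /= e.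
have dp := d_pos.
have gx : g (x %% d) < d by apply: glt; rewrite ltn_mod.
have gy : g (y %% d) < d by apply: glt; rewrite ltn_mod.
have em : g (x %% d) = g (y %% d).
  by have := congr1 (modn^~ d) e; rewrite /= !modnMDl (modn_small gx) (modn_small gy).
have er : x %% d = y %% d by apply: ginj; rewrite /= ?ltn_pmod.
have eq : x %/ d = y %/ d.
  by have := congr1 (divn^~ d) e; rewrite /= !divnMDl // (divn_small gx) (divn_small gy) !addn0.
apply: val_inj => /=; rewrite (divn_eq x d) (divn_eq y d) er eq //.
Qed.

Definition hperm : {perm 'I_n} := perm hfun_inj.

Lemma hpermE (x : 'I_n) : (hperm x : nat) = x %/ d * d + g (x %% d).
Proof. by rewrite permE. Qed.

Lemma hperm_wreath : in_wreath ds g -> @in_wreath_Sn ds n hperm.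
Proof. by move=> hw; exists g; split=> // x; rewrite hpermE. Qed.
End MkPerm.

Section Move.
Variable u : 'I_n.
Let xu := u %% d.
Let a := xu %% e0.
Let b := a.+1 %% e0.
Let c0 := xu %/ e0.

Lemma e0_pos : 0 < e0.
Proof. by have := e0_gt1; case: e0. Qed.

Lemma a_lt : a < e0. Proof. by rewrite ltn_mod e0_pos. Qed.
Lemma b_lt : b < e0. Proof. by rewrite ltn_mod e0_pos. Qed.
Lemma ab : a != b.
Proof.
have := a_lt; have := e0_gt1; rewrite /b => h1 h2.
case: (ltngtP a.+1 e0) => h.
- by rewrite modn_small // neq_ltn ltnSn.
- lia.
- rewrite h modnn; lia.
Qed.

Definition tog i := if i == a then b else if i == b then a else i.

Lemma togK i : tog (tog i) = i.
Proof.
rewrite /tog; have := ab.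
case: (eqVneq i a) => [-> | ia]; first by rewrite eq_sym => /negbTE ->; rewrite eqxx.
case: (eqVneq i b) => [-> | ib] hab; first by rewrite eqxx.
by rewrite (negbTE ia) (negbTE ib).
Qed.

Lemma tog_lt i : i < e0 -> tog i < e0.
Proof. by rewrite /tog; case: ifP => _; [rewrite b_lt | case: ifP => _ //; rewrite a_lt]. Qed.

Lemma tog_mod x : tog (x %% e0) < e0.
Proof. by apply: tog_lt; rewrite ltn_mod e0_pos. Qed.

Definition gm (x : nat) := if (x < d) && (x %/ e0 == c0) then c0 * e0 + tog (x %% e0) else x.

Lemma gm_div x : gm x %/ e0 = x %/ e0.
Proof.
rewrite /gm; case: ifP => // /andP [_ /eqP <-].
by rewrite divnMDl ?e0_pos // (divn_small (tog_mod x)) addn0.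
Qed.

Lemma gm_lt x : x < d -> gm x < d.
Proof.
move=> xd; rewrite /gm xd /=; case: ifP => // /eqP <-.
have t := tog_mod x.
have : x %/ e0 < d' by rewrite ltn_divLR ?e0_pos // mulnC -d_eq.
move: t; set q := x %/ e0; set tt := tog _ => t hq.
rewrite d_eq (mulnC e0); apply: (@leq_trans (q * e0 + e0)); first by rewrite ltn_add2l.
by rewrite -[X in X <= _]mulSnr leq_mul2r hq orbT.
Qed.

Lemma gm_inj x y : x < d -> y < d -> gm x = gm y -> x = y.
Proof.
move=> xd yd e.
have ed : x %/ e0 = y %/ e0 by rewrite -gm_div e gm_div.
move: e; rewrite /gm xd yd /= ed; case: ifP => _; last by [].
move=> e.
have : tog (x %% e0) = tog (y %% e0) by apply/eqP; rewrite -(eqn_add2l (c0 * e0)) e.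
move/(congr1 tog); rewrite !togK => em.
by rewrite (divn_eq x e0) (divn_eq y e0) ed em.
Qed.

Definition sig (k c i : nat) := if (k == 0) && (c == c0) then tog i else i.

Lemma gm_wreath : in_wreath ds gm.
Proof.
split; first exact: gm_lt.
exists sig; split.
  move=> k c _; split.
    move=> i; rewrite /sig; case: ifP => // /andP [/eqP -> _]; exact: tog_lt.
  move=> i j _ _; rewrite /sig; case: ifP => // _ /(congr1 tog); by rewrite !togK.
move=> x xd [|k] _.
  rewrite digit_cons0 high_cons0 digit_cons0 /sig /= /gm xd /=.
  by case: ifP => // _; rewrite modnMDl (modn_small (tog_mod x)).
by rewrite digit_consS digit_consS gm_div /sig.
Qed.

Definition hmove : {perm 'I_n} := hperm gm_lt gm_inj.

Lemma hmove_wreath : @in_wreath_Sn ds n hmove.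
Proof. exact: (hperm_wreath gm_lt gm_inj gm_wreath). Qed.

Lemma hmove_mod (x : 'I_n) : hmove x %% d = gm (x %% d).
Proof.
rewrite hpermE modnMDl modn_small //; apply: gm_lt; by rewrite ltn_mod d_pos.
Qed.

Lemma hmove_kap (x : 'I_n) : kap (hmove x) = kap x.
Proof. by rewrite /kap hmove_mod gm_div. Qed.

Lemma hmove_fix (v : 'I_n) : kap v != kap u -> hmove v = v.
Proof.
move=> kv; apply: val_inj => /=; rewrite hpermE /gm ltn_mod d_pos /=.
case: ifP => [/eqP e | _]; last by rewrite -divn_eq.
by move: kv; rewrite /kap e eqxx.
Qed.

Lemma hmove_moves : hmove u != u.
Proof.
apply/negP => /eqP /(congr1 (fun x : 'I_n => (x : nat) %% d)).
rewrite hmove_mod /gm -/xu ltn_mod d_pos eqxx /= => e.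
have ta : tog a = b by rewrite /tog eqxx.
have e2 : xu = c0 * e0 + a by exact: divn_eq.
have : c0 * e0 + b = c0 * e0 + a by rewrite -ta -e2; exact: e.
move/eqP; rewrite eqn_add2l eq_sym => /eqP eab.
by have := ab; rewrite eab eqxx.
Qed.
End Move.

Local Notation partn := Defs.partn.

Definition Tpart : partn n := preim_ptn kap.

Lemma T_ptn : ptn Tpart.
Proof. exact: preim_ptnP. Qed.

Lemma T_same x y : sameb Tpart x y = (kap x == kap y).
Proof. exact: preim_same. Qed.

Definition fixP (P : partn n) := forall h, @in_wreath_Sn ds n h -> part_act h P = P.

Lemma T_fix : fixP Tpart.
Proof.
move=> h hh; apply: same_fixed; first exact: T_ptn.
by move=> x y; rewrite !T_same wreath_kap.
Qed.

Lemma d_gt1 : 1 < d.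
Proof.
rewrite d_eq d'_eq; have := e0_gt1; have := dl_gt1; have := r_pos.
set A := e0; set B := r; set C := dl => *; nia.
Qed.

Lemma n_gt1 : 1 < n.
Proof. exact: leq_trans d_gt1 d_le_n. Qed.

Definition o0 : 'I_n := Ordinal hn.
Definition o1 : 'I_n := Ordinal n_gt1.

Lemma p_lt : e0 * r < n.
Proof.
apply: leq_trans d_le_n; rewrite d_eq d'_eq ltn_pmul2l ?e0_pos //.
by rewrite -{1}(muln1 r) ltn_pmul2l ?r_pos // dl_gt1.
Qed.

Definition op : 'I_n := Ordinal p_lt.

Lemma kap0 : kap o0 = 0.
Proof. by rewrite /kap /= mod0n div0n /K /digit div0n mod0n. Qed.

Lemma kap1 : kap o1 = 0.
Proof.
rewrite /kap /= modn_small ?d_gt1 // divn_small ?e0_gt1 //.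
by rewrite /K /digit div0n mod0n.
Qed.

Lemma kapp : kap op = 1.
Proof.
have hp : e0 * r < d.
  rewrite d_eq d'_eq ltn_pmul2l ?e0_pos //.
  by rewrite -{1}(muln1 r) ltn_pmul2l ?r_pos // dl_gt1.
rewrite /kap /= modn_small // mulKn ?e0_pos // /K /digit divnn r_pos.
by rewrite modn_small // dl_gt1.
Qed.

Lemma T_ndisc : Tpart != discrete_part n.
Proof.
apply/negP => /eqP e.
have := discrete_same T_ptn e (x := o0) (y := o1).
by rewrite T_same kap0 kap1 => /(_ isT) /(congr1 val).
Qed.

Lemma T_nindisc : Tpart != indiscrete_part n.
Proof.
apply/negP => /eqP e.
by have := indiscrete_same hn e o0 op; rewrite T_same kap0 kapp.
Qed.

Definition meet (P : partn n) : partn n :=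
  preim_ptn (fun x => (pblock P x, pblock Tpart x)).

Lemma meet_same P x y : ptn P -> sameb (meet P) x y = sameb P x y && sameb Tpart x y.
Proof.
move=> hP; rewrite preim_same xpair_eqE -!sameb_eq //; exact: T_ptn.
Qed.

Lemma meet_ndisc P : ptn P -> fixP P -> P != discrete_part n -> meet P != discrete_part n.
Proof.
move=> hP fP nd.
have [u [v [uv suv]]] : exists u v, u != v /\ sameb P u v.
  apply/not_all_not_ex => hne; move/negP: nd; apply; apply/eqP.
  apply: part_eq => //; first by rewrite discrete_preim; apply: preim_ptnP.
  move=> x y; rewrite discrete_preim preim_same.
  case: (eqVneq x y) => [-> | xy]; first by rewrite sameb_refl.
  apply/negP => sxy; apply: (hne x); exists y; split=> //.
apply/negP => /eqP e.
have nd2 := discrete_same (preim_ptnP _) e.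
case: (eqVneq (kap u) (kap v)) => [ek | nk].
  have := nd2 u v; rewrite meet_same // suv T_same ek eqxx => /(_ isT) /eqP.
  by rewrite (negbTE uv).
set h := hmove u.
have hv : h v = v by apply: hmove_fix; rewrite eq_sym.
have shu : sameb P (h u) v by rewrite -[X in sameb _ _ X]hv fixed_same //; apply: fP; apply: hmove_wreath.
have su : sameb P u (h u).
  by rewrite sameb_eq //; rewrite sameb_eq // in suv; rewrite sameb_eq // in shu; rewrite (eqP suv) (eqP shu).
have := nd2 u (h u); rewrite meet_same // su T_same hmove_kap eqxx => /(_ isT) e2.
by have := hmove_moves u; rewrite -e2 eqxx.
Qed.

Definition fixb (P : partn n) : bool :=
  if excluded_middle_informative (fixP P) then true else false.

Lemma fixbP P : fixb P <-> fixP P.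
Proof. by rewrite /fixb; case: excluded_middle_informative. Qed.

Definition Fix : {set partn n} := [set P : partn n | Pi P && fixb P].

Lemma FixP P : P \in Fix -> [/\ ptn P, P != discrete_part n, P != indiscrete_part n & fixP P].
Proof. by rewrite inE => /andP [/and3P [h1 h2 h3] /fixbP h4]. Qed.

Lemma T_Fix : Tpart \in Fix.
Proof.
rewrite inE; apply/andP; split; last by apply/fixbP; exact: T_fix.
by apply/and3P; split; [exact: T_ptn | exact: T_ndisc | exact: T_nindisc].
Qed.

Lemma meet_Fix P : P \in Fix -> meet P \in Fix.
Proof.
case/FixP => hP nd ni fP.
rewrite inE; apply/andP; split.
  apply/and3P; split; [exact: preim_ptnP | exact: meet_ndisc |].
  apply/negP => /eqP e.
  by have := indiscrete_same hn e o0 op; rewrite meet_same // T_same kap0 kapp andbF.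
apply/fixbP => h hh; apply: same_fixed; first exact: preim_ptnP.
move=> x y; rewrite !meet_same // (fixed_same _ _ hP (fP h hh)).
by rewrite (fixed_same _ _ T_ptn (T_fix hh)).
Qed.

Lemma Fix_collapses :
  collapses (oc (@refines n) Fix) (fun s => s = [set Tpart]).
Proof.
apply: (@phase1 _ _ (@refines_refl n) (@refines_trans n) _ _ _ meet (leqnn _)).
- move=> P Q /FixP [hP _ _ _] /FixP [hQ _ _ _] /(refinesP hP hQ) h1 /(refinesP hQ hP) h2.
  by apply: part_eq => // x y; apply/idP/idP => [/h1 | /h2].
- exact: T_Fix.
move=> P hF; have [hP _ _ _] := FixP hF; split.
- exact: meet_Fix.
- by apply/(refinesP (preim_ptnP _) hP) => x y; rewrite meet_same // => /andP [].
- by apply/(refinesP (preim_ptnP _) T_ptn) => x y; rewrite meet_same // => /andP [].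
move=> w /FixP [hw _ _ _] /(refinesP hw hP) h1 /(refinesP hw T_ptn) h2.
apply/(refinesP hw (preim_ptnP _)) => x y sxy.
by rewrite meet_same // h1 // h2.
Qed.

End Wr.


Theorem lemma6p6 (n : nat) (ds : seq nat) :
  0 < n ->
  1 < size ds ->
  all (fun di => 1 < di) ds ->
  (\prod_(i <- ds) i) %| n ->
  collapsible
    (fixed_complex (order_complex (@Pi n) (@refines n))
                   (@part_act n) (@in_wreath_Sn ds n)).
Proof.
case: ds => [|e0 ds'] //= hn hs hall hdn.
have hs' : 0 < size ds' by [].
exists (Tpart n e0 ds').
apply: (collapses_ext _ _ (Fix_collapses hn hs' hall hdn)) => // s; split.
  case=> h1 h2 h3; split; first split=> // v /h2 /FixP [hP nd ni _].
    by apply/and3P.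
  by move=> h hh v /h2 /FixP [_ _ _ /(_ h hh)].
case=> [[h1 h2 h3] hfix]; split=> // v vs.
rewrite inE; apply/andP; split; first exact: h2.
by apply/(fixbP e0 ds') => h hh; apply: hfix.
Qed.
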